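(* The growth function $g_M:\mathbb{N}_+\to\mathbb{N}$ of every multiway system $M$ is primitive recursive.
   Context: A (string-based) multiway system is a triple $M=(R,s_{\text{init}},\Sigma)$ with $\Sigma$ a finite alphabet, $R$ a finite set of string replacement rules $r\to t$ ($r,t\in\Sigma^*$), and $s_{\text{init}}\in\Sigma^*$. Its states graph has as vertices the strings reachable from $s_{\text{init}}$, with an edge $u\to v$ whenever $v$ arises from $u$ by replacing one occurrence of some rule's left side by its right side. The growth function $g_M(n)$ is the number of states whose shortest-path distance from $s_{\text{init}}$ equals $n-1$ (i.e. the number of new states first appearing in generation $n$). *)

(* Defs.v *)
From mathcomp Require Import all_boot.
Set Implicit Arguments. Unset Strict Implicit. Unset Printing Implicit Defensive.

Definition vcons k (a : nat) (x : 'I_k -> nat) : 'I_k.+1 -> nat :=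
  fun i => match unlift ord0 i with Some j => x j | None => a end.

Definition vtail k (v : 'I_k.+1 -> nat) : 'I_k -> nat :=
  fun i => v (lift ord0 i).

(* primitive recursion: f(0, x) = g x, f(n+1, x) = h(n, f(n, x), x) *)
Definition prec k (g : ('I_k -> nat) -> nat) (h : ('I_k.+2 -> nat) -> nat)
  (v : 'I_k.+1 -> nat) : nat :=
  nat_rec (fun _ => nat) (g (vtail v))
    (fun n acc => h (vcons n (vcons acc (vtail v)))) (v ord0).

Inductive PR : forall k : nat, (('I_k -> nat) -> nat) -> Prop :=
| PR_zero : PR (fun _ : 'I_0 -> nat => 0)
| PR_succ : PR (fun v : 'I_1 -> nat => (v ord0).+1)
| PR_proj k (i : 'I_k) : PR (fun v : 'I_k -> nat => v i)
| PR_comp k m (g : ('I_m -> nat) -> nat) (hs : 'I_m -> ('I_k -> nat) -> nat) :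
    PR g -> (forall j, PR (hs j)) ->
    PR (fun v : 'I_k -> nat => g (fun j => hs j v))
| PR_rec k (g : ('I_k -> nat) -> nat) (h : ('I_k.+2 -> nat) -> nat) :
    PR g -> PR h -> PR (prec g h).

Definition prim_rec1 (f : nat -> nat) : Prop :=
  exists F : ('I_1 -> nat) -> nat, PR F /\ forall n, F (fun _ => n) = f n.

Section Multiway.
Variable Sigma : finType.
Variable R : seq (seq Sigma * seq Sigma).
Variable s_init : seq Sigma.

Definition mw_step (u v : seq Sigma) : Prop :=
  exists r t x y, (r, t) \in R /\ u = x ++ r ++ y /\ v = x ++ t ++ y.

Fixpoint reach_in (n : nat) (w : seq Sigma) : Prop :=
  match n with
  | 0 => w = s_init
  | n'.+1 => exists u, reach_in n' u /\ mw_step u w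
  end.

Definition at_distance (d : nat) (w : seq Sigma) : Prop :=
  reach_in d w /\ forall d', d' < d -> ~ reach_in d' w.

Definition growth_is (n c : nat) : Prop :=
  exists l : seq (seq Sigma),
    [/\ uniq l, (forall w, w \in l <-> at_distance n.-1 w) & size l = c].

End Multiway.

(* Main.v *)
Require Import Defs.
From mathcomp Require Import all_boot.
From Stdlib Require Import FunctionalExtensionality.
From mathcomp Require Import zify.
Set Implicit Arguments. Unset Strict Implicit. Unset Printing Implicit Defensive.

Lemma PR_ext k (f g : ('I_k -> nat) -> nat) : PR f -> (forall v, f v = g v) -> PR g.
Proof. by move=> Pf e; have -> : g = f by apply: functional_extensionality => v; rewrite e. Qed.

Lemma vcons0 k a (x : 'I_k -> nat) : vcons a x ord0 = a.
Proof. by rewrite /vcons unlift_none. Qed.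
Lemma vconsS k a (x : 'I_k -> nat) i : vcons a x (lift ord0 i) = x i.
Proof. by rewrite /vcons liftK. Qed.
Lemma vtail_vcons k a (x : 'I_k -> nat) : vtail (vcons a x) = x.
Proof. by apply: functional_extensionality => i; rewrite /vtail vconsS. Qed.

Lemma PR_const k c : PR (fun _ : 'I_k -> nat => c).
Proof.
elim: c => [|c IH].
  by apply: (@PR_comp k 0 (fun _ => 0) (fun _ _ => 0)); [exact: PR_zero| case].
exact: (@PR_comp k 1 (fun v => (v ord0).+1) (fun _ _ => c) PR_succ (fun _ => IH)).
Qed.

Lemma PR_bin (op : nat -> nat -> nat) :
  PR (fun w : 'I_2 -> nat => op (w ord0) (w (lift ord0 ord0))) ->
  forall k (f1 f2 : ('I_k -> nat) -> nat), PR f1 -> PR f2 ->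
  PR (fun v => op (f1 v) (f2 v)).
Proof.
move=> Pop k f1 f2 P1 P2.
apply: PR_ext (@PR_comp k 2 _ (fun j => if val j is 0 then f1 else f2) Pop _) _.
  by case=> [[|j] Hj].
by move=> v.
Qed.

Lemma PR_un (op : nat -> nat) :
  PR (fun w : 'I_1 -> nat => op (w ord0)) ->
  forall k (f : ('I_k -> nat) -> nat), PR f -> PR (fun v => op (f v)).
Proof.
move=> Pop k f P.
exact: (@PR_comp k 1 _ (fun _ => f) Pop (fun _ => P)).
Qed.

Lemma PR_add : PR (fun w : 'I_2 -> nat => w ord0 + w (lift ord0 ord0)).
Proof.
have Ph : PR (fun w : 'I_3 -> nat => (w (lift ord0 ord0)).+1).
  exact: (@PR_comp 3 1 _ (fun _ w => w (lift ord0 ord0)) PR_succ (fun _ => PR_proj _)).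
apply: PR_ext (PR_rec (PR_proj (ord0 : 'I_1)) Ph) _ => w.
rewrite /prec; elim: (w ord0) => [|n IH] /=; first by [].
by rewrite IH vconsS vcons0.
Qed.

Lemma PR_mul : PR (fun w : 'I_2 -> nat => w ord0 * w (lift ord0 ord0)).
Proof.
have Ph : PR (fun w : 'I_3 -> nat => w (lift ord0 ord0) + w (lift ord0 (lift ord0 ord0))).
  exact: (PR_bin PR_add (PR_proj _) (PR_proj _)).
apply: PR_ext (PR_rec (PR_const 1 0) Ph) _ => w.
rewrite /prec; elim: (w ord0) => [|n IH] /=; first by [].
by rewrite IH !vconsS vcons0 mulSn addnC.
Qed.

Lemma PR_pred : PR (fun w : 'I_1 -> nat => (w ord0).-1).
Proof.
apply: PR_ext (PR_rec PR_zero (PR_proj (ord0 : 'I_2))) _ => w.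
by rewrite /prec; case: (w ord0) => [|n] //=; rewrite vcons0.
Qed.

Lemma PR_subr : PR (fun w : 'I_2 -> nat => w (lift ord0 ord0) - w ord0).
Proof.
have Ph : PR (fun w : 'I_3 -> nat => (w (lift ord0 ord0)).-1).
  exact: (PR_un PR_pred (PR_proj _)).
apply: PR_ext (PR_rec (PR_proj (ord0 : 'I_1)) Ph) _ => w.
rewrite /prec; elim: (w ord0) => [|n IH] /=; first by rewrite subn0.
by rewrite IH vconsS vcons0 subnS.
Qed.

Definition prec_app k (Z : ('I_k -> nat) -> nat) (S : ('I_k.+2 -> nat) -> nat)
  (N : ('I_k -> nat) -> nat) (v : 'I_k -> nat) := prec Z S (vcons (N v) v).

Lemma PR_iter k Z S N : PR Z -> PR S -> PR N -> PR (@prec_app k Z S N).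
Proof.
move=> PZ PS PN.
apply: (@PR_comp k k.+1 _ (fun j v => vcons (N v) v j) (PR_rec PZ PS)) => j.
rewrite /vcons; case: (unlift ord0 j) => [i|] //; exact: PR_proj.
Qed.

Inductive expr : Type :=
| EVar of nat | ECst of nat
| EAdd of expr & expr | EMul of expr & expr | ESub of expr & expr
| EIter of expr & expr & expr.

Definition scons (a : nat) (env : nat -> nat) : nat -> nat :=
  fun i => if i is i'.+1 then env i' else a.

Fixpoint eval (env : nat -> nat) (e : expr) : nat :=
  match e with
  | EVar i => env i
  | ECst c => c
  | EAdd a b => eval env a + eval env b
  | EMul a b => eval env a * eval env b
  | ESub a b => eval env a - eval env b
  | EIter n z s => nat_rec (fun _ => nat) (eval env z)
      (fun j acc => eval (scons j (scons acc env)) s) (eval env n)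
  end.

Definition ext k (v : 'I_k -> nat) : nat -> nat :=
  fun i => if @insub _ (fun i => i < k) 'I_k i is Some j then v j else 0.

Lemma ext_vcons k a (v : 'I_k -> nat) : ext (vcons a v) = scons a (ext v).
Proof.
apply: functional_extensionality => -[|i] /=.
  rewrite /ext insubT //=.
  by rewrite -[RHS](vcons0 a v); congr vcons; apply: val_inj.
rewrite /ext; case: (ltnP i k) => h.
  have h1 : i.+1 < k.+1 by [].
  rewrite (insubT (fun j => j < k.+1) h1) (insubT (fun j => j < k) h) /=.
  by rewrite -(vconsS a v); congr vcons; apply: val_inj.
rewrite !insubF //; first by rewrite ltnNge h.
by rewrite ltnS ltnNge h.
Qed.

Theorem expr_PR e : forall k, PR (fun v : 'I_k -> nat => eval (ext v) e).
Proof.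
elim: e => [i|c|a IHa b IHb|a IHa b IHb|a IHa b IHb|n IHn z IHz s IHs] k /=.
- case: (ltnP i k) => h.
    apply: PR_ext (PR_proj (Ordinal h)) _ => v.
    by rewrite /ext insubT /=; congr v; apply: val_inj.
  apply: PR_ext (PR_const k 0) _ => v.
  by rewrite /ext insubF // ltnNge h.
- exact: PR_const.
- exact: (PR_bin PR_add).
- exact: (PR_bin PR_mul).
- exact: (PR_bin (op := fun x y => y - x) PR_subr).
- apply: PR_ext (PR_iter (IHz k) (IHs k.+2) (IHn k)) _ => v.
  rewrite /prec_app /prec vtail_vcons vcons0.
  elim: (eval (ext v) n) => [|j IH] //=.
  by rewrite IH !ext_vcons.
Qed.

Definition up (f : nat -> nat) : nat -> nat := fun i => if i is i'.+1 then (f i').+1 else 0.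

Fixpoint ren (f : nat -> nat) (e : expr) : expr :=
  match e with
  | EVar i => EVar (f i)
  | ECst c => ECst c
  | EAdd a b => EAdd (ren f a) (ren f b)
  | EMul a b => EMul (ren f a) (ren f b)
  | ESub a b => ESub (ren f a) (ren f b)
  | EIter n z s => EIter (ren f n) (ren f z) (ren (up (up f)) s)
  end.

Lemma eval_ren e : forall f env, eval env (ren f e) = eval (env \o f) e.
Proof.
elim: e => [i|c|a IHa b IHb|a IHa b IHb|a IHa b IHb|n IHn z IHz s IHs] f env //=;
  try by rewrite IHa IHb.
rewrite IHn IHz; elim: (eval (env \o f) n) => [|j IH] //=.
rewrite IH IHs; congr eval.
by apply: functional_extensionality => -[|[|i]].
Qed.

Definition lift1 e := ren succn e.
Lemma eval_lift1 a env e : eval (scons a env) (lift1 e) = eval env e.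
Proof. by rewrite /lift1 eval_ren. Qed.

Definition ESum n b :=
  EIter n (ECst 0) (EAdd (EVar 1) (ren (fun i => if i is i'.+1 then i'.+2 else 0) b)).

Lemma eval_sum env n b :
  eval env (ESum n b) = \sum_(i < eval env n) eval (scons i env) b.
Proof.
rewrite /=; elim: (eval env n) => [|j IH] /=; first by rewrite big_ord0.
rewrite big_ord_recr /= IH eval_ren; congr (_ + eval _ b).
by apply: functional_extensionality => -[|i].
Qed.

Definition EPow a e := EIter e (ECst 1) (EMul (EVar 1) (ren (fun i => i.+2) a)).
Lemma eval_pow env a e : eval env (EPow a e) = eval env a ^ eval env e.
Proof.
rewrite /=; elim: (eval env e) => [|j IH] //=.
by rewrite IH eval_ren expnS mulnC.
Qed.

Definition ELe a b := ESub (ECst 1) (ESub a b).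
Lemma eval_le env a b : eval env (ELe a b) = (eval env a <= eval env b).
Proof. rewrite /=; case: leqP => h; first by move: h; rewrite -subn_eq0 => /eqP ->. by apply/eqP; rewrite subn_eq0 subn_gt0. Qed.

Definition EEq a b := EMul (ELe a b) (ELe b a).
Lemma eval_eq env a b : eval env (EEq a b) = (eval env a == eval env b).
Proof.
have -> : eval env (EEq a b) = eval env (ELe a b) * eval env (ELe b a) by [].
by rewrite !eval_le mulnb eqn_leq.
Qed.

Definition ENot x := ESub (ECst 1) x.
Lemma eval_not env x : eval env (ENot x) = (eval env x == 0).
Proof. by rewrite /=; case: (eval env x) => [|[|n]]. Qed.

Definition EPos x := ELe (ECst 1) x.
Lemma eval_pos env x : eval env (EPos x) = (0 < eval env x).
Proof. by rewrite eval_le. Qed.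

Lemma sum_lt a c : \sum_(i < a) (i < c) = minn a c.
Proof.
elim: a => [|a IH]; first by rewrite big_ord0 min0n.
rewrite big_ord_recr /= IH; case: (ltnP a c) => h /=; lia.
Qed.

Definition EDiv a q :=
  ESum a (ELe (EMul (EAdd (EVar 0) (ECst 1)) (lift1 q)) (lift1 a)).
Lemma eval_div env a q : 0 < eval env q -> eval env (EDiv a q) = eval env a %/ eval env q.
Proof.
move=> hq; rewrite eval_sum.
under eq_bigr => i _ do rewrite eval_le /= !eval_lift1 addn1 -leq_divRL //.
rewrite sum_lt; apply/minn_idPr; exact: leq_div.
Qed.

Definition EBit M u :=
  let X := EDiv M (EPow (ECst 2) u) in ESub X (EMul (ECst 2) (EDiv X (ECst 2))).
Lemma eval_bit env M u : eval env (EBit M u) = odd (eval env M %/ 2 ^ eval env u).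
Proof.
set X := EDiv M (EPow (ECst 2) u).
have -> : eval env (EBit M u) = eval env X - 2 * eval env (EDiv X (ECst 2)) by [].
have hX : eval env X = eval env M %/ 2 ^ eval env u by rewrite eval_div eval_pow ?expn_gt0.
rewrite eval_div // hX.
set y := eval env M %/ 2 ^ eval env u.
by rewrite {1}(divn_eq y 2) modn2 mulnC addKn.
Qed.

Definition T (A l : nat) := \sum_(i < l) A ^ i.
Lemma T_S A l : T A l.+1 = 1 + A * T A l.
Proof. by rewrite /T big_ord_recl expn0 big_distrr; congr (_ + _); apply: eq_bigr => i _; rewrite expnS. Qed.
Lemma T_mono A l l' : l <= l' -> T A l <= T A l'.
Proof.
move=> h; rewrite /T -(subnKC h) big_split_ord /=; exact: leq_addr.
Qed.
Lemma T_uniq A l l' x : T A l <= x < T A l.+1 -> T A l' <= x < T A l'.+1 -> l = l'.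
Proof.
move=> /andP[h1 h2] /andP[h3 h4]; apply/eqP; rewrite eqn_leq; apply/andP; split;
  rewrite leqNgt; apply/negP => h.
- by move: (T_mono A h) => /leq_trans/(_ h1); rewrite leqNgt h4.
- by move: (T_mono A h) => /leq_trans/(_ h3); rewrite leqNgt h2.
Qed.

Section Enc.
Variable Sigma : finType.
Definition nA := #|Sigma|.
Arguments nA : simpl never.
Local Notation A := nA.

Definition idx (a : Sigma) := index a (enum Sigma).
Lemma idx_lt a : idx a < A.
Proof. by rewrite /idx /nA cardE index_mem mem_enum. Qed.

Fixpoint enc (s : seq Sigma) : nat := if s is a :: s' then idx a + 1 + A * enc s' else 0.

Lemma enc_cat s1 s2 : enc (s1 ++ s2) = enc s1 + A ^ size s1 * enc s2.
Proof. elim: s1 => [|a s1 IH] /=; first by rewrite mul1n. by rewrite IH expnS mulnDr mulnA !addnA. Qed.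

Lemma enc_T s : T A (size s) <= enc s < T A (size s).+1.
Proof.
elim: s => [|a s IH] /=; first by rewrite /T big_ord0 big_ord1.
have := idx_lt a; move: IH; rewrite (T_S A (size s).+1) !T_S.
set t := T A (size s); set e := enc s; clearbody t e => /andP[h1 h2] h3.
have h4 : A * e <= A * (A * t) by rewrite leq_mul2l; apply/orP; right; lia.
have h5 : A * t <= A * e by rewrite leq_mul2l h1 orbT.
apply/andP; split; first lia.
rewrite mulnDr muln1; lia.
Qed.

Lemma enc_lt s : enc s < A.+1 ^ size s.
Proof. elim: s => [|a s IH] //=; have := idx_lt a; rewrite expnS; nia. Qed.

Lemma size_le_enc s : size s <= enc s.
Proof. elim: s => [|a s IH] //=; have := idx_lt a; nia. Qed.

Lemma idx_inj : injective idx.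
Proof.
move=> a b e; have := congr1 (nth a (enum Sigma)) e.
by rewrite /idx !nth_index ?mem_enum.
Qed.

Lemma enc_cons a s : enc (a :: s) = idx a + 1 + A * enc s.
Proof. by []. Qed.

Lemma enc_inj : injective enc.
Proof.
elim=> [|a s IH] [|b t] //=; try (move=> h; exfalso; lia).
move=> e; have ha := idx_lt a; have hb := idx_lt b.
have e' : enc s * A + idx a = enc t * A + idx b by lia.
have e1 : idx a = idx b.
  by have := congr1 (modn^~ A) e'; rewrite /= !modnMDl !modn_small.
have hA : 0 < A by lia.
rewrite e1 in e'; move/addIn: e' => /eqP; rewrite eqn_pmul2r // => /eqP /IH ->.
by rewrite (idx_inj e1).
Qed.

Lemma enc_surj s n : n <= enc s -> exists t, enc t = n.
Proof.
case: (posnP A) => hA.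
  case: s => [|a s]; first by rewrite leqn0 => /eqP ->; exists [::].
  by have := idx_lt a; rewrite hA.
move=> _; elim/ltn_ind: n => -[|m] IH; first by exists [::].
have [x0 _] : exists x : Sigma, x \in Sigma by apply/card_gt0P.
have hr : m %% A < A by rewrite ltn_mod.
have [t ht] := IH (m %/ A) (leq_ltn_trans (leq_div _ _) (ltnSn m)).
exists (nth x0 (enum Sigma) (m %% A) :: t); rewrite enc_cons ht.
rewrite /idx index_uniq ?enum_uniq -?cardE //.
by rewrite {3}(divn_eq m A); lia.
Qed.
End Enc.

Lemma eval_var env i : eval env (EVar i) = env i. Proof. by []. Qed.
Lemma eval_cst env c : eval env (ECst c) = c. Proof. by []. Qed.
Lemma eval_add env a b : eval env (EAdd a b) = eval env a + eval env b. Proof. by []. Qed.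
Lemma eval_mul env a b : eval env (EMul a b) = eval env a * eval env b. Proof. by []. Qed.
Lemma eval_subE env a b : eval env (ESub a b) = eval env a - eval env b. Proof. by []. Qed.

Definition ET (A : nat) (l : expr) := ESum l (EPow (ECst A) (EVar 0)).
Lemma eval_T env A l : eval env (ET A l) = T A (eval env l).
Proof. by rewrite /ET eval_sum; apply: eq_bigr => i _; rewrite eval_pow. Qed.

Lemma sum_gt0 n (F : nat -> nat) :
  0 < \sum_(i < n) F i <-> exists2 i, i < n & 0 < F i.
Proof.
elim: n => [|n IH]; first by rewrite big_ord0; split=> // -[].
rewrite big_ord_recr /= addn_gt0; split.
  case/orP => [/IH [i hi h]|h]; [exists i => //; exact: ltnW | by exists n].
move=> [i]; rewrite ltnS leq_eqVlt => /orP[/eqP -> ->|hi h]; first by rewrite orbT.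
by apply/orP; left; apply/IH; exists i.
Qed.

Definition stepRTn (A er lr et lt u w : nat) : nat :=
  \sum_(lx < u.+1) \sum_(x < u.+1) \sum_(y < u.+1)
    ((T A lx <= x) && (x < T A lx.+1) && (u == x + A ^ lx * (er + A ^ lr * y))
      && (w == x + A ^ lx * (et + A ^ lt * y))).

Definition EStepRT (A er lr et lt : nat) (eu ew : expr) : expr :=
 ESum (EAdd eu (ECst 1))
  (ESum (EAdd (lift1 eu) (ECst 1))
   (ESum (EAdd (lift1 (lift1 eu)) (ECst 1))
     (EMul (EMul (EMul (ELe (ET A (EVar 2)) (EVar 1))
                       (ELe (EAdd (EVar 1) (ECst 1)) (ET A (EAdd (EVar 2) (ECst 1)))))
           (EEq (lift1 (lift1 (lift1 eu)))
                (EAdd (EVar 1) (EMul (EPow (ECst A) (EVar 2))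
                   (EAdd (ECst er) (EMul (EPow (ECst A) (ECst lr)) (EVar 0)))))))
      (EEq (lift1 (lift1 (lift1 ew)))
                (EAdd (EVar 1) (EMul (EPow (ECst A) (EVar 2))
                   (EAdd (ECst et) (EMul (EPow (ECst A) (ECst lt)) (EVar 0))))))))).

Lemma eval_stepRT env A er lr et lt eu ew :
  eval env (EStepRT A er lr et lt eu ew) = stepRTn A er lr et lt (eval env eu) (eval env ew).
Proof.
rewrite /EStepRT eval_sum eval_add eval_cst addn1; apply: eq_bigr => lx _.
rewrite eval_sum eval_add eval_cst eval_lift1 addn1; apply: eq_bigr => x _.
rewrite eval_sum eval_add eval_cst !eval_lift1 addn1; apply: eq_bigr => y _.
rewrite eval_mul eval_eq eval_mul eval_eq eval_mul !eval_le !eval_T.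
do 3 rewrite ?eval_add ?eval_mul ?eval_pow ?eval_lift1 ?eval_cst ?eval_var.
by rewrite !addn1 /= !mulnb.
Qed.

Lemma bit_sum C (P : nat -> bool) u :
  odd ((\sum_(w < C) P w * 2 ^ w) %/ 2 ^ u) = (u < C) && P u.
Proof.
elim: C P u => [|C IH] P u; first by rewrite big_ord0 div0n.
rewrite big_ord_recl; change (nat_of_ord (@ord0 C)) with 0.
have -> : \sum_(i < C) P (bump 0 i) * 2 ^ bump 0 i = 2 * \sum_(i < C) P i.+1 * 2 ^ i.
  by rewrite big_distrr; apply: eq_bigr => i _; rewrite expnS mulnCA.
case: u => [|u].
  by rewrite expn0 divn1 muln1 oddD !oddM /=; case: (P 0).
rewrite expn0 muln1 (expnS 2 u) divnMA [2 * _]mulnC addnC divnMDl // (@divn_small (P 0) 2) ?addn0; last by case: (P 0).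
by rewrite (IH (fun w => P w.+1)) ltnS.
Qed.

Lemma sum_gt0' n (F : 'I_n -> nat) : 0 < \sum_(i < n) F i <-> exists i, 0 < F i.
Proof.
rewrite lt0n sum_nat_eq0; split.
  by move/forallPn => [i] /= h; exists i; rewrite lt0n.
by move=> [i hi]; apply/forallPn; exists i; rewrite /= -lt0n.
Qed.

Lemma sum_seq_gt0 (I : eqType) (r : seq I) (F : I -> nat) :
  0 < \sum_(i <- r) F i <-> exists2 i, i \in r & 0 < F i.
Proof.
rewrite lt0n sum_nat_seq_neq0; split.
  by move/hasP => [i hi] /= h; exists i => //; rewrite lt0n.
by move=> [i hi h]; apply/hasP; exists i => //; rewrite -lt0n.
Qed.

Lemma in_sumn x s : x \in s -> x <= sumn s.
Proof.
elim: s => [|y s IH] //=; rewrite in_cons => /orP[/eqP ->|/IH h]; first exact: leq_addr.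
exact: (leq_trans h (leq_addl _ _)).
Qed.

Section Growth.
Variable Sigma : finType.
Variable R : seq (seq Sigma * seq Sigma).
Variable s_init : seq Sigma.
Local Notation A := (nA Sigma).

Lemma enc_suffix (p q : seq Sigma) : enc q <= enc (p ++ q).
Proof.
elim: p => [|a p IH] //=; have := idx_lt a; move: IH.
set z := enc (p ++ q); set y := enc q; clearbody z y; nia.
Qed.

Definition stepRT (rt : seq Sigma * seq Sigma) u w :=
  stepRTn A (enc rt.1) (size rt.1) (enc rt.2) (size rt.2) u w.
Definition stepn u w := \sum_(rt <- R) stepRT rt u w.

Lemma stepRT_spec r t su w :
  0 < stepRT (r, t) (enc su) w <->
  exists sx sy, su = sx ++ r ++ sy /\ w = enc (sx ++ t ++ sy).
Proof.
rewrite /stepRT /stepRTn /=; split.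
  move=> /sum_gt0' [lx] /sum_gt0' [x] /sum_gt0' [y].
  rewrite lt0n eqb0 negbK => /andP[/andP[/andP[h1 h2] /eqP e1] /eqP e2].
  have [sx ex] := enc_surj (ltnSE (ltn_ord x)).
  have [sy ey] := enc_surj (ltnSE (ltn_ord y)).
  have hl : size sx = lx.
    apply: (T_uniq (enc_T sx)); by rewrite ex h1 h2.
  exists sx, sy; split.
    by apply: enc_inj; rewrite e1 !enc_cat hl ex ey.
  by rewrite e2 !enc_cat hl ex ey.
move=> [sx [sy [-> ->]]].
set u := enc (sx ++ r ++ sy).
have hx : enc sx <= u by rewrite /u enc_cat leq_addr.
have hl : size sx <= u := leq_trans (size_le_enc sx) hx.
have hy : enc sy <= u by rewrite /u catA enc_suffix.
apply/sum_gt0'; exists (inord (size sx)); apply/sum_gt0'; exists (inord (enc sx)).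
apply/sum_gt0'; exists (inord (enc sy)); rewrite !inordK ?ltnS //.
by rewrite enc_T /u !enc_cat !eqxx.
Qed.

Lemma step_spec su w :
  0 < stepn (enc su) w <-> exists sw, w = enc sw /\ mw_step R su sw.
Proof.
rewrite /stepn sum_seq_gt0; split.
  move=> [[r t] hin /stepRT_spec [sx [sy [e1 e2]]]].
  by exists (sx ++ t ++ sy); split => //; exists r, t, sx, sy.
move=> [sw [-> [r [t [x [y [hin [e1 e2]]]]]]]].
by exists (r, t) => //; apply/stepRT_spec; exists x, y; rewrite e1 e2.
Qed.

Definition mm := sumn [seq size rt.2 | rt <- R].

Lemma step_size u v : mw_step R u v -> size v <= size u + mm.
Proof.
move=> [r [t [x [y [hin [-> ->]]]]]].
have ht : size t <= mm by apply: in_sumn; apply: (map_f (fun rt => size rt.2) hin).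
have ht2 : @size Sigma t <= mm := ht.
rewrite !size_cat; move: ht2; set m := mm; clearbody m; lia.
Qed.

Lemma reach_size d s : reach_in R s_init d s -> size s <= size s_init + d * mm.
Proof.
elim: d s => [|d IH] s /=; first by move=> ->; rewrite addn0.
move=> [u [/IH hu /step_size hs]]; rewrite mulSn; move: hu hs; set m := mm; clearbody m; lia.
Qed.


Definition Cb d := (A.+1) ^ (size s_init + d * mm).
Definition bitn M u : bool := odd (M %/ 2 ^ u).
Definition M0 := \sum_(w < Cb 0) (nat_of_ord w == enc s_init) * 2 ^ w.
Definition Mnext j M := \sum_(w < Cb j.+1) (0 < \sum_(u < Cb j) bitn M u * stepn u w) * 2 ^ w.
Definition Mf d := nat_rec (fun _ => nat) M0 (fun j M => Mnext j M) d.

Lemma reach_lt d s : reach_in R s_init d s -> enc s < Cb d.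
Proof.
move=> h; apply: (leq_trans (enc_lt s)); apply: leq_pexp2l => //.
exact: reach_size h.
Qed.

Lemma Mf_spec d n : bitn (Mf d) n <-> exists s, n = enc s /\ reach_in R s_init d s.
Proof.
elim: d n => [|d IH] n.
  rewrite /bitn /= /M0 (@bit_sum _ (fun w => w == enc s_init)); split.
    by case/andP => _ /eqP ->; exists s_init.
  move=> [s [-> /= ->]]; rewrite eqxx andbT; exact: (@reach_lt 0).
rewrite /bitn /= /Mnext (@bit_sum _ (fun w => 0 < \sum_(u < Cb d) bitn (Mf d) u * stepn u w)).
split.
  case/andP => hn /sum_gt0' [u]; rewrite muln_gt0 => /andP[hb hs].
  rewrite lt0b in hb; have [su [eu hr]] := (IH u).1 hb.
  rewrite eu in hs; have [sw [-> hst]] := (step_spec su n).1 hs.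
  by exists sw; split => //; exists su.
move=> [s [-> hr]]; apply/andP; split; first exact: (@reach_lt d.+1 s hr).
move: hr => [su [hr hst]].
apply/sum_gt0'; exists (Ordinal (reach_lt hr)); rewrite muln_gt0 /=; apply/andP; split.
  by rewrite lt0b; apply/IH; exists su.
by apply/step_spec; exists s.
Qed.

Definition gsem n :=
  \sum_(w < Cb n.-1) bitn (Mf n.-1) w * (\sum_(d2 < n.-1) bitn (Mf d2) w == 0).

Lemma sum_count C (P : nat -> bool) : \sum_(w < C) P w = count P (iota 0 C).
Proof.
rewrite -(big_mkord xpredT (fun w => nat_of_bool (P w))) /index_iota subn0.
by elim: (iota 0 C) => [|x s IH]; rewrite ?big_nil ?big_cons ?IH.
Qed.

Lemma list_of (ns : seq nat) :
  (forall n, n \in ns -> exists s : seq Sigma, n = enc s) ->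
  exists l : seq (seq Sigma), map (@enc Sigma) l = ns.
Proof.
elim: ns => [|n ns IH] h; first by exists [::].
have [s es] := h n (mem_head _ _).
have [l el] : exists l : seq (seq Sigma), map (@enc Sigma) l = ns.
  by apply: IH => m hm; apply: h; rewrite in_cons hm orbT.
by exists (s :: l); rewrite /= el es.
Qed.

Lemma gsem_spec n : growth_is R s_init n (gsem n).
Proof.
set d := n.-1.
set Pw := fun w => bitn (Mf d) w && (\sum_(d2 < d) bitn (Mf d2) w == 0).
have hg : gsem n = count Pw (iota 0 (Cb d)).
  by rewrite -sum_count; apply: eq_bigr => w _; rewrite /Pw -mulnb.
have hP : forall s, Pw (enc s) <-> at_distance R s_init d s.
  move=> s; rewrite /Pw /at_distance; split.
    case/andP => /Mf_spec [s' [/enc_inj <- hr]]; rewrite sum_nat_eq0 => /forallP h.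
    split => // d' hd' hr'.
    have := h (Ordinal hd'); rewrite /= eqb0 => /negP; apply.
    by apply/Mf_spec; exists s.
  move=> [hr hn]; apply/andP; split; first by apply/Mf_spec; exists s.
  rewrite sum_nat_eq0; apply/forallP => i /=; rewrite eqb0; apply/negP.
  move/Mf_spec => [s' [/enc_inj <- hr']]; exact: (hn i (ltn_ord i) hr').
set ns := filter Pw (iota 0 (Cb d)).
have [l el] : exists l : seq (seq Sigma), map (@enc Sigma) l = ns.
  apply: list_of => w; rewrite mem_filter => /andP[/andP[/Mf_spec [s [-> _]] _] _].
  by exists s.
exists l; split.
- apply: (@map_uniq _ _ (@enc Sigma)); rewrite el; apply: filter_uniq; exact: iota_uniq.
- move=> w; rewrite -(mem_map (@enc_inj Sigma)) el mem_filter mem_iota /= -hP.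
  split; first by case/andP.
  move=> h; rewrite h /=; have := (hP w).1 h => -[hr _]; exact: reach_lt hr.
- by rewrite hg -size_filter -/ns -el size_map.
Qed.

End Growth.

Fixpoint EStepL (Sigma : finType) (Rl : seq (seq Sigma * seq Sigma)) (eu ew : expr) : expr :=
  if Rl is rt :: Rl' then
    EAdd (EStepRT (nA Sigma) (enc rt.1) (size rt.1) (enc rt.2) (size rt.2) eu ew) (EStepL Rl' eu ew)
  else ECst 0.

Lemma eval_stepL (Sigma : finType) (Rl : seq (seq Sigma * seq Sigma)) env eu ew :
  eval env (EStepL Rl eu ew) = stepn Rl (eval env eu) (eval env ew).
Proof.
rewrite /stepn; elim: Rl => [|rt Rl IH]; first by rewrite big_nil.
by rewrite big_cons eval_add eval_stepRT IH.
Qed.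

Lemma nat_recS (z : nat) (f : nat -> nat -> nat) j :
  nat_rec (fun _ => nat) z f j.+1 = f j (nat_rec (fun _ => nat) z f j).
Proof. by []. Qed.

Section Exprs.
Variable Sigma : finType.
Variable R : seq (seq Sigma * seq Sigma).
Variable s_init : seq Sigma.
Local Notation A := (nA Sigma).

Definition ECb de := EPow (ECst A.+1) (EAdd (ECst (size s_init)) (EMul de (ECst (mm R)))).
Lemma eval_Cb env de : eval env (ECb de) = Cb R s_init (eval env de).
Proof. by rewrite /ECb eval_pow. Qed.

Definition EM0 := ESum (ECb (ECst 0))
  (EMul (EEq (EVar 0) (ECst (enc s_init))) (EPow (ECst 2) (EVar 0))).
Lemma eval_M0 env : eval env EM0 = M0 R s_init.
Proof.
rewrite /EM0 eval_sum eval_Cb; apply: eq_bigr => w _.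
by rewrite eval_mul eval_eq eval_pow.
Qed.

Definition EMstep := ESum (ECb (EAdd (EVar 0) (ECst 1)))
  (EMul (EPos (ESum (ECb (EVar 1)) (EMul (EBit (EVar 3) (EVar 0)) (EStepL R (EVar 0) (EVar 1)))))
        (EPow (ECst 2) (EVar 0))).
Lemma eval_Mstep env j M : eval (scons j (scons M env)) EMstep = Mnext R s_init j M.
Proof.
rewrite /EMstep eval_sum eval_Cb eval_add addn1; apply: eq_bigr => w _.
rewrite eval_mul eval_pos eval_pow eval_sum eval_Cb; congr (nat_of_bool (0 < _) * _).
apply: eq_bigr => u _.
by rewrite eval_mul eval_bit eval_stepL.
Qed.

Definition EM de := EIter de EM0 EMstep.
Lemma eval_M env de : eval env (EM de) = Mf R s_init (eval env de).
Proof.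
have -> : eval env (EM de) = nat_rec (fun _ => nat) (eval env EM0)
   (fun j M => eval (scons j (scons M env)) EMstep) (eval env de) by [].
rewrite /Mf; elim: (eval env de) => [|j IH]; first exact: eval_M0.
by rewrite !nat_recS eval_Mstep IH.
Qed.

Definition EG := ESum (ECb (ESub (EVar 0) (ECst 1)))
  (EMul (EBit (EM (ESub (EVar 1) (ECst 1))) (EVar 0))
        (ENot (ESum (ESub (EVar 1) (ECst 1)) (EBit (EM (EVar 0)) (EVar 1))))).
Lemma eval_G env : eval env EG = gsem R s_init (env 0).
Proof.
rewrite /EG /gsem eval_sum eval_Cb eval_subE subn1; apply: eq_bigr => w _.
rewrite eval_mul eval_bit eval_M eval_subE subn1 eval_not eval_sum eval_subE subn1.
congr (_ * nat_of_bool (_ == 0)); apply: eq_bigr => d2 _.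
by rewrite eval_bit eval_M.
Qed.

End Exprs.

Theorem lemma5 (Sigma : finType) (R : seq (seq Sigma * seq Sigma))
    (s_init : seq Sigma) :
  exists g : nat -> nat,
    prim_rec1 g /\ forall n, 0 < n -> growth_is R s_init n (g n).
Proof.
exists (fun n => eval (ext (fun _ : 'I_1 => n)) (EG R s_init)); split.
  by exists (fun v => eval (ext v) (EG R s_init)); split; [exact: expr_PR|].
move=> n _; rewrite eval_G.
have -> : ext (fun _ : 'I_1 => n) 0 = n by rewrite /ext insubT.
exact: gsem_spec.
Qed.
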